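(* Let $\mathcal A$ be a $\sigma$-structure with universe $A$ and let $\mathfrak C$ be the class of all $(\sigma\cup\sigma_A)$-structures $\mathcal C$ for which $\{P_a^{\mathcal C}: a\in A\}$ is a partition of the universe of $\mathcal C$. Then $\mathsf d_{\mathcal A}=\Omega(\mathsf d_{\mathcal A^{\mathrm{id}},\mathfrak C})$.
   Context: $\sigma_A=\{P_a: a\in A\}$ is a set of new unary relation symbols, and the individualisation $\mathcal A^{\mathrm{id}}$ is the $(\sigma\cup\sigma_A)$-expansion of $\mathcal A$ with $P_a^{\mathcal A^{\mathrm{id}}}=\{a\}$. For structures $\mathcal A,\mathcal B$, $\mathsf d(\mathcal A,\mathcal B)$ is the minimum size $\|C\|$ (number of gates plus wires) of a d-representation $C$ of $\operatorname{Hom}(\mathcal A,\mathcal B)$; for a class $\mathfrak C$, $\mathsf d_{\mathcal A,\mathfrak C}(m)=\max\{\mathsf d(\mathcal A,\mathcal C):\mathcal C\in\mathfrak C,\|\mathcal C\|\le m\}$ with $\|\mathcal C\|=\sum_R|R^{\mathcal C}|$, and $\mathsf d_{\mathcal A}$ abbreviates $\mathsf d_{\mathcal A,\mathfrak C}$ for $\mathfrak C$ the class of all structures of the signature of $\mathcal A$. All structures are assumed connected. A factorisation circuit $C$ for finite sets $A,B$ is a finite directed acyclic graph with a unique sink $s$; input gates (no incoming edges) are labelled $\{a\mapsto b\}$, other nodes $\cup$ or $\times$; $\operatorname{dom}(g)$ is $\{a\}$ for an input gate and the union of the children's domains otherwise; $C$ is well-defined if each $\cup$-gate has the same domain as each child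 and children of each $\times$-gate have pairwise disjoint domains; then $S_g=\{\{a\mapsto b\}\}$ for inputs, the union of the children's sets for $\cup$-gates, and $\{h_1\cup\dots\cup h_r:h_i\in S_{g_i}\}$ for $\times$-gates, $S_C=S_s$. A d-representation of $\operatorname{Hom}(\mathcal A,\mathcal B)$ is a well-defined factorisation circuit with $S_C=\operatorname{Hom}(\mathcal A,\mathcal B)$. *)

(* Defs.v *)
From Stdlib Require Import ClassicalEpsilon.
From mathcomp Require Import all_boot.


(* minimum of {k | P k}; 0 if the set is empty *)
Definition nat_min (P : nat -> Prop) : nat :=
  epsilon (inhabits 0%N)
    (fun n => (P n /\ forall k, P k -> n <= k) \/ ((forall k, ~ P k) /\ n = 0%N)).

(* maximum (= least upper bound) of {k | P k}; 0 if the set is empty *)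
Definition nat_max (P : nat -> Prop) : nat :=
  epsilon (inhabits 0%N)
    (fun n => (forall k, P k -> k <= n) /\
              (forall u, (forall k, P k -> k <= u) -> n <= u)).

Record structure (sym : finType) (ar : sym -> nat) := Structure {
  univ : finType;
  interp : forall R : sym, {set (ar R).-tuple univ}
}.
Arguments structure {sym} ar.
Arguments Structure {sym ar} univ interp.
Arguments univ {sym ar} s.
Arguments interp {sym ar} s R.

Definition ssize {sym : finType} {ar : sym -> nat} (C : structure ar) : nat :=
  \sum_(R : sym) #|interp C R|.

Definition gaifman {sym : finType} {ar : sym -> nat} (C : structure ar)
  : rel (univ C) :=
  fun x y => (x != y) &&
    [exists R : sym, exists t in interp C R, (x \in (t : seq _)) && (y \in (t : seq _))].

Definition connected {sym : finType} {ar : sym -> nat} (C : structure ar) : Prop :=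
  forall x y : univ C, connect (gaifman C) x y.

Definition is_hom {sym : finType} {ar : sym -> nat} (A B : structure ar)
  (f : univ A -> univ B) : bool :=
  [forall R : sym, forall t in interp A R, map_tuple f t \in interp B R].

(* Hom(A,B), as a set of (total) partial maps univ A -> option (univ B) *)
Definition homs {sym : finType} {ar : sym -> nat} (A B : structure ar)
  : {set {ffun univ A -> option (univ B)}} :=
  [set h | [exists f : {ffun univ A -> univ B},
              is_hom A B f && (h == [ffun x => Some (f x)])]].

(* P_a (= inr a) unary with P_a^{A^id} = {a}.                          *)

Definition ar_id {sym : finType} (ar : sym -> nat) (U : finType)
  (R : sym + U) : nat :=
  match R with inl R' => ar R' | inr _ => 1%N end.

Definition indiv {sym : finType} {ar : sym -> nat} (A : structure ar)
  : structure (ar_id ar (univ A)) :=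
  @Structure _ (ar_id ar (univ A)) (univ A)
    (fun R => match R as R0 return {set (ar_id ar (univ A) R0).-tuple (univ A)} with
              | inl R' => interp A R'
              | inr a => [set [tuple a]]
              end).

Definition Pset {sym : finType} {ar : sym -> nat} {U : finType}
  (C : structure (ar_id ar U)) (a : U) : {set univ C} :=
  [set x | [tuple x] \in interp C (inr a)].

Definition P_partition {sym : finType} {ar : sym -> nat} {U : finType}
  (C : structure (ar_id ar U)) : Prop :=
  (forall a, Pset C a != set0) /\
  (forall a a', a != a' -> [disjoint Pset C a & Pset C a']) /\
  (forall x : univ C, exists a, x \in Pset C a).

Inductive glabel (A B : Type) := GIn of A & B | GUnion | GProd.
Arguments GIn {A B} _ _. Arguments GUnion {A B}. Arguments GProd {A B}.

(* gates are 'I_cn; a wire u -> g (u is a child of g) is cedge u g *)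
Record circuit (A B : finType) := Circuit {
  cn : nat;
  clab : 'I_cn -> glabel A B;
  cedge : rel 'I_cn
}.
Arguments Circuit {A B} cn clab cedge.
Arguments cn {A B} c.
Arguments clab {A B} c _.
Arguments cedge {A B} c _ _.

Definition csize {A B : finType} (C : circuit A B) : nat :=
  (cn C + #|[set p : 'I_(cn C) * 'I_(cn C) | cedge C p.1 p.2]|)%N.

Definition is_sink {A B : finType} (C : circuit A B) (s : 'I_(cn C)) : bool :=
  [forall v, ~~ cedge C s v].

Definition is_input_label {A B : Type} (l : glabel A B) : bool :=
  if l is GIn _ _ then true else false.

Definition circuit_wf {A B : finType} (C : circuit A B) : Prop :=
  (forall u v, cedge C u v -> ~~ connect (cedge C) v u) /\
  (exists s, is_sink C s /\ forall t, is_sink C t -> t = s) /\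
  (forall g, is_input_label (clab C g) = [forall u, ~~ cedge C u g]).

Definition pfun (A B : finType) := {ffun A -> option B}.

(* dom and S satisfy the defining recursive equations (which have a unique
   solution, C being acyclic) *)
Definition circuit_sem {A B : finType} (C : circuit A B)
  (dom : 'I_(cn C) -> {set A}) (S : 'I_(cn C) -> {set pfun A B}) : Prop :=
  forall g, match clab C g with
  | GIn a b => dom g = [set a] /\
               S g = [set [ffun x => if x == a then Some b else None]]
  | GUnion => dom g = \bigcup_(u | cedge C u g) dom u /\
              S g = \bigcup_(u | cedge C u g) S u
  | GProd => dom g = \bigcup_(u | cedge C u g) dom u /\
             forall h, h \in S g <->
               exists F : 'I_(cn C) -> pfun A B,
                 (forall u, cedge C u g -> F u \in S u) /\
                 (forall a b, h a = Some b <-> exists u, cedge C u g /\ F u a = Some b)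
  end.

Definition circuit_welldef {A B : finType} (C : circuit A B)
  (dom : 'I_(cn C) -> {set A}) : Prop :=
  forall g, match clab C g with
  | GUnion => forall u, cedge C u g -> dom u = dom g
  | GProd => forall u v, cedge C u g -> cedge C v g -> u != v ->
                         [disjoint dom u & dom v]
  | GIn _ _ => True
  end.

Definition is_drep {A B : finType} (C : circuit A B) (X : {set pfun A B}) : Prop :=
  circuit_wf C /\
  exists dom S, circuit_sem C dom S /\ circuit_welldef C dom /\
    forall s, is_sink C s -> S s = X.

Definition dsize {sym : finType} {ar : sym -> nat} (A B : structure ar) : nat :=
  nat_min (fun k => exists C : circuit (univ A) (univ B),
                      is_drep C (homs A B) /\ csize C = k).

Definition dclass {sym : finType} {ar : sym -> nat} (A : structure ar)
  (Cls : structure ar -> Prop) (m : nat) : nat :=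
  nat_max (fun k => exists C : structure ar, Cls C /\ ssize C <= m /\ k = dsize A C).

(* all (connected) sigma-structures *)
Definition all_structs {sym : finType} {ar : sym -> nat} (C : structure ar) : Prop :=
  connected C.

Definition partition_class {sym : finType} {ar : sym -> nat} {U : finType}
  (C : structure (ar_id ar U)) : Prop :=
  connected C /\ P_partition C.

Definition big_Omega (f g : nat -> nat) : Prop :=
  exists k : nat, (0 < k)%N /\ exists m0, forall m, m0 <= m -> g m <= k * f m.

(* Main.v *)
Require Import Defs.
From Stdlib Require Import ClassicalEpsilon Classical.
From mathcomp Require Import all_boot.
Set Implicit Arguments. Unset Strict Implicit. Unset Printing Implicit Defensive.

Lemma connect_map (G G' : finType) (e : rel G) (e' : rel G') (f : G' -> G) :
  (forall x y, e' x y -> e (f x) (f y)) -> forall x y, connect e' x y -> connect e (f x) (f y).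
Proof.
move=> H x y /connectP [p pp ->]; elim: p x pp => [|z p IH] x /=; first by rewrite connect0.
by move/andP=> [exz pz]; apply: connect_trans (connect1 (H _ _ exz)) (IH _ pz).
Qed.

Definition gsink (G : finType) (e : rel G) (s : G) : bool := [forall v, ~~ e s v].

Definition gwf (A B G : finType) (lab : G -> glabel A B) (e : rel G) : Prop :=
  (forall u v, e u v -> ~~ connect e v u) /\
  (exists s, gsink e s /\ forall t, gsink e t -> t = s) /\
  (forall g, is_input_label (lab g) = [forall u, ~~ e u g]).

Definition gsem (A B G : finType) (lab : G -> glabel A B) (e : rel G)
  (dom : G -> {set A}) (S : G -> {set pfun A B}) : Prop :=
  forall g, match lab g with
  | GIn a b => dom g = [set a] /\
               S g = [set [ffun x => if x == a then Some b else None]]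
  | GUnion => dom g = \bigcup_(u | e u g) dom u /\
              S g = \bigcup_(u | e u g) S u
  | GProd => dom g = \bigcup_(u | e u g) dom u /\
             forall h, h \in S g <->
               exists F : G -> pfun A B,
                 (forall u, e u g -> F u \in S u) /\
                 (forall a b, h a = Some b <-> exists u, e u g /\ F u a = Some b)
  end.

Definition gwelldef (A B G : finType) (lab : G -> glabel A B) (e : rel G)
  (dom : G -> {set A}) : Prop :=
  forall g, match lab g with
  | GUnion => forall u, e u g -> dom u = dom g
  | GProd => forall u v, e u g -> e v g -> u != v -> [disjoint dom u & dom v]
  | GIn _ _ => True
  end.

Definition gdrep (A B G : finType) (lab : G -> glabel A B) (e : rel G) (X : {set pfun A B}) : Prop :=
  gwf lab e /\ exists dom S, gsem lab e dom S /\ gwelldef lab e dom /\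
    forall s, gsink e s -> S s = X.

Definition gsize (G : finType) (e : rel G) : nat := (#|G| + #|[set p : G * G | e p.1 p.2]|)%N.

Lemma drep_g (A B : finType) (C : circuit A B) X :
  is_drep C X -> gdrep (clab C) (cedge C) X.
Proof. by []. Qed.

Lemma g_drep (A B : finType) (C : circuit A B) X :
  gdrep (clab C) (cedge C) X -> is_drep C X.
Proof. by []. Qed.

Lemma csize_g (A B : finType) (C : circuit A B) : csize C = gsize (cedge C).
Proof. by rewrite /csize /gsize card_ord. Qed.
Lemma forall_bij (G G' : finType) (f : G' -> G) (g : G -> G') (gK : cancel g f) (P : pred G) :
  [forall u, P (f u)] = [forall w, P w].
Proof.
apply/forallP/forallP => H w; last exact: H.
by rewrite -(gK w); apply: H.
Qed.

Lemma gdrep_bij (A B G G' : finType) (lab : G -> glabel A B) (e : rel G) X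
  (f : G' -> G) (g : G -> G') (fK : cancel f g) (gK : cancel g f) :
  gdrep lab e X -> gdrep (fun x => lab (f x)) (fun x y => e (f x) (f y)) X.
Proof.
have sinkE x : gsink (fun x y => e (f x) (f y)) x = gsink e (f x).
  by rewrite /gsink (forall_bij gK (fun w => ~~ e (f x) w)).
have fbij : bijective f by exists g.
move=> [[ac [[s [ss su]] inp]] [dom [S [sem [wd sk]]]]]; split.
  split.
    move=> u v euv; apply/negP => /(connect_map (e := e) (f := f) (fun x y (h : e (f x) (f y)) => h)) c.
    by move: (ac _ _ euv); rewrite c.
  split.
    exists (g s); split; first by rewrite sinkE gK.
    by move=> t; rewrite sinkE => /su <-; rewrite fK.
  by move=> x; rewrite inp (forall_bij gK (fun w => ~~ e w (f x))).
exists (fun x => dom (f x)), (fun x => S (f x)); split; last split.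
- move=> x; move: (sem (f x)); case: (lab (f x)) => [a b||] //.
    by rewrite !(reindex f (onW_bij _ fbij)).
  move=> [-> H]; split; first by rewrite !(reindex f (onW_bij _ fbij)).
  move=> h; rewrite H; split.
    move=> [F [F1 F2]]; exists (fun u => F (f u)); split; first by move=> u eu; exact: F1.
    move=> a b; rewrite F2; split.
      by move=> [u [eu Fu]]; exists (g u); rewrite gK.
    by move=> [u [eu Fu]]; exists (f u).
  move=> [F [F1 F2]]; exists (fun u => F (g u)); split.
    by move=> u eu; have := F1 (g u); rewrite gK; apply.
  move=> a b; rewrite F2; split.
    by move=> [u [eu Fu]]; exists (f u); rewrite fK.
  by move=> [u [eu Fu]]; exists (g u); rewrite gK.
- move=> x; move: (wd (f x)); case: (lab (f x)) => [a b||] //.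
    by move=> H u /H.
  move=> H u v eu ev nuv; apply: H => //.
  by apply: contra nuv => /eqP /(can_inj fK) ->.
- by move=> t; rewrite sinkE => /sk.
Qed.

Lemma gsize_bij (G G' : finType) (e : rel G)
  (f : G' -> G) (g : G -> G') (fK : cancel f g) (gK : cancel g f) :
  gsize (fun x y => e (f x) (f y)) = gsize e.
Proof.
have fbij : bijective f by exists g.
rewrite /gsize (bij_eq_card fbij); congr (_ + _)%N.
have -> : [set p : G * G | e p.1 p.2] =
  (fun p : G' * G' => (f p.1, f p.2)) @: [set p : G' * G' | e (f p.1) (f p.2)].
  apply/setP => [[x y]]; rewrite inE /=; apply/idP/imsetP.
    by move=> exy; exists (g x, g y); rewrite ?inE /= !gK.
  by move=> [[x' y']]; rewrite inE /= => h [-> ->].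
rewrite card_imset //.
by move=> [x y] [x' y'] /= [/(can_inj fK) -> /(can_inj fK) ->].
Qed.

Lemma transport (A B G : finType) (lab : G -> glabel A B) (e : rel G) X :
  gdrep lab e X -> exists C : circuit A B, is_drep C X /\ csize C = gsize e.
Proof.
move=> H.
exists (Circuit #|G| (fun i => lab (enum_val i)) (fun i j => e (enum_val i) (enum_val j))).
split.
  apply: g_drep; exact: (gdrep_bij (@enum_valK G) (@enum_rankK G) H).
by rewrite csize_g /= (gsize_bij _ (@enum_valK G) (@enum_rankK G)).
Qed.

Lemma dag_ind (G : finType) (e : rel G) (ac : forall u v, e u v -> ~~ connect e v u)
  (P : G -> Prop) : (forall g, (forall u, e u g -> P u) -> P g) -> forall g, P g.
Proof.
move=> IH g; have [n] := ubnP #|[set u | connect e u g]|.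
elim: n g => // n IHn g Hn; apply: IH => u eu; apply: IHn.
rewrite -ltnS; apply: leq_trans Hn; rewrite ltnS; apply: proper_card; apply/properP; split.
  apply/subsetP => x; rewrite !inE => cxu; exact: connect_trans cxu (connect1 eu).
by exists g; rewrite !inE ?connect0 //; apply: ac.
Qed.

Lemma has_child (A B G : finType) (lab : G -> glabel A B) (e : rel G) g :
  (is_input_label (lab g) = [forall u, ~~ e u g]) -> ~~ is_input_label (lab g) ->
  exists u, e u g.
Proof. by move=> -> /forallPn [u /negPn eu]; exists u. Qed.

Lemma no_input_false (A B G : finType) (lab : G -> glabel A B) (e : rel G) X :
  (A -> False) -> gdrep lab e X -> False.
Proof.
move=> nA [[ac [[s _] inp]] _].
apply: (dag_ind ac (P := fun _ => False)) s => g IH.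
have := inp g; case E: (lab g) => [a b||] /= H; first exact: nA a.
  by have [u eu] := @has_child _ _ _ lab e g (inp g) ltac:(by rewrite E); exact: IH eu.
by have [u eu] := @has_child _ _ _ lab e g (inp g) ltac:(by rewrite E); exact: IH eu.
Qed.

Lemma S_inv (A B G : finType) (lab : G -> glabel A B) (e : rel G) dom S :
  (forall u v, e u v -> ~~ connect e v u) ->
  (forall g, is_input_label (lab g) = [forall u, ~~ e u g]) ->
  gsem lab e dom S -> gwelldef lab e dom ->
  forall g, S g != set0 /\ forall h, h \in S g -> forall a, (h a != None) = (a \in dom g).
Proof.
move=> ac inp sem wd; apply: (dag_ind ac) => g IH.
have := inp g; have := sem g; have := wd g; case E: (lab g) => [a b||] /=.
- move=> _ [-> ->] _; split; first by apply/set0Pn; eexists; apply: set11.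
  by move=> h /set1P -> a'; rewrite ffunE in_set1; case: (a' == a).
- move=> wdg [domg Sg] inpg.
  have [u0 eu0] := @has_child _ _ _ lab e g (inp g) ltac:(by rewrite E).
  split.
    have [h hin] := set0Pn _ (proj1 (IH _ eu0)).
    by apply/set0Pn; exists h; rewrite Sg; apply/bigcupP; exists u0.
  move=> h; rewrite Sg => /bigcupP [u eu hu] a.
  by rewrite (proj2 (IH _ eu) _ hu) (wdg _ eu).
- move=> wdg [domg Sg] inpg.
  have [u0 eu0] := @has_child _ _ _ lab e g (inp g) ltac:(by rewrite E).
  split.
    pose F u := odflt [ffun _ => None] [pick h in S u].
    have FS u : e u g -> F u \in S u.
      move=> eu; rewrite /F; case: pickP => [h //|] /= H.
      by have [h hin] := set0Pn _ (proj1 (IH _ eu)); move: (H h); rewrite hin.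
    pose h := [ffun a => if [pick u | e u g && (F u a != None)] is Some u then F u a else None].
    apply/set0Pn; exists h; apply/Sg; exists F; split => // a b.
    rewrite /h ffunE; split.
      case: pickP => [u /andP [eu _] Fu|_ //]; by exists u.
    move=> [u [eu Fu]]; case: pickP => [u' /andP [eu' nu']|].
      case: (eqVneq u u') => [<- //|nuu'].
      have := wdg _ _ eu eu' nuu'.
      have au : a \in dom u by rewrite -(proj2 (IH _ eu) _ (FS _ eu)) Fu.
      have au' : a \in dom u' by rewrite -(proj2 (IH _ eu') _ (FS _ eu')).
      by move/disjointFr => /(_ a au); rewrite au'.
    by move=> /(_ u); rewrite eu Fu.
  move=> h /Sg [F [F1 F2]] a; rewrite domg; apply/idP/bigcupP.
    case Eh: (h a) => [b|] // _; have [u [eu Fu]] := (proj1 (F2 a b) Eh).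
    by exists u => //; rewrite -(proj2 (IH _ eu) _ (F1 _ eu)) Fu.
  move=> [u eu au]; move: au; rewrite -(proj2 (IH _ eu) _ (F1 _ eu)).
  case Fu: (F u a) => [b|] // _.
  by rewrite (proj2 (F2 a b)) //; exists u.
Qed.

Lemma drep_nonempty (A B G : finType) (lab : G -> glabel A B) (e : rel G) X :
  gdrep lab e X -> X != set0.
Proof.
move=> [[ac [[s [ss _]] inp]] [dom [S [sem [wd sk]]]]].
by rewrite -(sk _ ss); exact: (proj1 (S_inv ac inp sem wd s)).
Qed.

Notation tT X := {h | h \in X}.
Notation tG X A := ((tT X * A) + option (tT X))%type.

Definition tlab (A B : finType) (X : {set pfun A B}) (x : tG X A) : glabel A B :=
  match x with
  | inl (h, a) => if val h a is Some b then GIn a b else GUnion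
  | inr (Some _) => GProd
  | inr None => GUnion
  end.

Definition tedge (A B : finType) (X : {set pfun A B}) : rel (tG X A) := fun x y =>
  match x, y with
  | inl (h, _), inr (Some h') => h == h'
  | inr (Some _), inr None => true
  | _, _ => false
  end.

Definition tlev (A B : finType) (X : {set pfun A B}) (x : tG X A) : nat :=
  match x with inl _ => 0 | inr (Some _) => 1 | inr None => 2 end.

Lemma triv_drep (A B : finType) (X : {set pfun A B}) (a0 : A) (h0 : pfun A B) :
  h0 \in X -> (forall h a, h \in X -> h a != None) ->
  gdrep (@tlab A B X) (@tedge A B X) X.
Proof.
move=> h0X tot.
have totT (h : tT X) a : exists b, val h a = Some b.
  by case E: (val h a) => [b|]; [exists b | move: (tot _ a (valP h)); rewrite E].
have levE (x y : tG X A) : @tedge A B X x y -> tlev x < tlev y.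
  by case: x => [[h a]|[h|]]; case: y => [[h' a']|[h'|]].
have levC (x y : tG X A) : connect (@tedge A B X) x y -> tlev x <= tlev y.
  move/connectP=> [p pp ->]; elim: p x pp => [|z p IH] x //= /andP [exz pz].
  exact: leq_trans (ltnW (levE _ _ exz)) (IH _ pz).
split; first split.
- move=> u v euv; apply/negP => /levC; rewrite leqNgt; by rewrite levE.
- split.
    exists (inr None); split; first by apply/forallP => -[[h a]|[h|]].
    move=> [[h a]|[h|]] //= /forallP H.
      by move: (H (inr (Some h))) => /=; rewrite eqxx.
    by move: (H (inr None)).
  move=> [[h a]|[h|]] /=.
  - have [b ->] := totT h a; by apply/esym/forallP => -[[h' a']|[h'|]].
  - by apply/esym/forallPn; exists (inl (h, a0)); rewrite /= eqxx.
  - by apply/esym/forallPn; exists (inr (Some (Sub h0 h0X))).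
pose dom (x : tG X A) : {set A} := if x is inl (h, a) then [set a] else setT.
pose S (x : tG X A) : {set pfun A B} := match x with
  | inl (h, a) => [set [ffun y => if y == a then val h a else None]]
  | inr (Some h) => [set val h]
  | inr None => X end.
exists dom, S; split; last split.
- move=> [[h a]|[h|]] /=.
  + have [b E] := totT h a; rewrite E; split => //.
  + split.
      apply/setP => x; rewrite inE; apply/esym/bigcupP.
      by exists (inl (h, x)); rewrite /= ?eqxx ?inE.
    move=> h'; split.
      move/set1P ->.
      exists (fun u : tG X A => if u is inl (h1, a1) then ([ffun y => if y == a1 then val h1 a1 else None] : pfun A B)
                       else ([ffun _ => None] : pfun A B)); split.
        by move=> [[h1 a1]|[h1|]] //= _; rewrite inE.
      move=> a b; split.
        by move=> E; exists (inl (h, a)); rewrite /= eqxx ffunE eqxx.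
      move=> [[[h1 a1]|[h1|]] [eu Fu]] //=; move/eqP: eu => eu; subst h1.
      by move: Fu; rewrite ffunE; case: eqP => [->|].
    move=> [F [F1 F2]]; apply/set1P/ffunP => a.
    have [b E] := totT h a; rewrite E; apply/F2.
    exists (inl (h, a)); split; first by rewrite /= eqxx.
    by move: (F1 (inl (h, a)) (eqxx _)) => /set1P ->; rewrite ffunE eqxx.
  + split.
      apply/setP => x; rewrite inE; apply/esym/bigcupP.
      by exists (inr (Some (Sub h0 h0X))); rewrite ?inE.
    apply/setP => x; apply/idP/bigcupP.
      by move=> xX; exists (inr (Some (Sub x xX))); rewrite //= inE.
    by move=> [[[h1 a1]|[h1|]] //= _ /set1P ->]; exact: valP.
- move=> [[h a]|[h|]] /=.
  + by have [b ->] := totT h a.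
  + move=> [[h1 a1]|[h1|]] // [[h2 a2]|[h2|]] //= /eqP <- /eqP <-.
    move=> neq; rewrite disjoints1 inE; apply: contra neq => /eqP ->; by [].
  + by move=> [[h1 a1]|[h1|]].
- by move=> [[h a]|[h|]] //= /forallP H; [move: (H (inr (Some h))); rewrite /= eqxx | move: (H (inr None))].
Qed.

Lemma triv_size (A B : finType) (X : {set pfun A B}) :
  gsize (@tedge A B X) <= (#|X| * #|A| + #|X|.+1) + (#|X| * #|A| + #|X|.+1) ^ 2.
Proof.
have cG : #|{: tG X A}| = #|X| * #|A| + #|X|.+1.
  by rewrite card_sum card_prod card_option card_sig.
rewrite /gsize cG leq_add2l.
by rewrite (leq_trans (max_card _)) // card_prod cG expnS expn1.
Qed.

Definition okf (A B : finType) (P : A -> B -> bool) (h : pfun A B) : bool :=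
  [forall a, if h a is Some b then P a b else true].

Lemma okfP (A B : finType) (P : A -> B -> bool) (h : pfun A B) :
  reflect (forall a b, h a = Some b -> P a b) (okf P h).
Proof.
apply: (iffP forallP) => H a.
  by move=> b E; move: (H a); rewrite E.
by case E: (h a) => [b|] //; apply: H.
Qed.

Lemma restrict (A B G : finType) (lab : G -> glabel A B) (e : rel G) X (P : A -> B -> bool) :
  gdrep lab e X -> [set h in X | okf P h] != set0 ->
  exists C : circuit A B, is_drep C [set h in X | okf P h] /\ csize C <= gsize e.
Proof.
move=> [[ac [[s [ss su]] inp]] [dom [S [sem [wd sk]]]]] X'n.
pose alive g := [exists h in S g, okf P h].
pose ea := [rel u v | [&& e u v, alive u & alive v]].
pose good g := alive g && connect ea g s.
have goodc g u : good g -> e u g -> alive u -> good u.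
  move=> /andP [ag cg] eu au; rewrite /good au /=.
  by apply: connect_trans cg; apply: connect1; rewrite /= eu au ag.
have Xsub h : h \in S s -> okf P h -> h \in [set h in X | okf P h].
  by rewrite (sk _ ss) inE => -> ->.
have alives : alive s.
  have [h] := set0Pn _ X'n; rewrite inE => /andP [hX okh].
  by apply/existsP; exists h; rewrite (sk _ ss) hX okh.
have goods : good s by rewrite /good alives connect0.
have prodch g : lab g = GProd -> alive g -> forall u, e u g -> alive u.
  move=> E /existsP [h /andP [hS okh]] u eu.
  move: (sem g); rewrite E => -[_ /(_ h) [H _]]; have [F [F1 F2]] := H hS.
  apply/existsP; exists (F u); rewrite F1 //=; apply/okfP => a b Fu.
  by apply: (okfP _ _ okh); apply/F2; exists u.
have unch g : lab g = GUnion -> alive g -> exists2 u, e u g & alive u.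
  move=> E /existsP [h /andP [hS okh]].
  move: (sem g); rewrite E => -[_ Sg]; move: hS; rewrite Sg => /bigcupP [u eu hu].
  by exists u => //; apply/existsP; exists h; rewrite hu.
pose G' := {g | good g}.
pose lab' (x : G') := lab (val x).
pose e' (x y : G') := e (val x) (val y).
have gsinkE (t : G') : gsink e' t -> val t = s.
  move=> /forallP st; case: (eqVneq (val t) s) => // nts.
  have := valP t; rewrite /good => /andP [agt /connectP [[|v p] /= pp ets]].
    by rewrite ets eqxx in nts.
  move: pp => /andP [/andP [etv /andP [_ av]] pp].
  have gv : good v by rewrite /good av; apply/connectP; exists p.
  by move: (st (Sub v gv)); rewrite /e' SubK etv.
have [C [HC sC]] : exists C : circuit A B, is_drep C [set h in X | okf P h] /\ csize C = gsize e'.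
  apply: (@transport _ _ _ lab' e'); split; first split.
  - move=> u v euv; apply/negP => /(connect_map (e := e) (f := val) (fun x y (h : e' x y) => h)) c.
    by move: (ac _ _ euv); rewrite c.
  - split.
      exists (Sub s goods); split.
        by apply/forallP => v; rewrite /e' SubK; move/forallP: ss; apply.
      by move=> t /gsinkE st; apply: val_inj; rewrite SubK.
    move=> g; rewrite /lab' inp; apply/forallP/forallP => H u.
      exact: H.
    apply/negP => eug; have gg := valP g.
    have [u' eu' au'] : exists2 u', e u' (val g) & alive u'.
      move: (sem (val g)) (inp (val g)).
      case E: (lab (val g)) => [a b||] /= _.
      + by move/esym/forallP/(_ u); rewrite eug.
      + by move=> _; apply: unch => //; case/andP: gg.
      + move=> _; exists u => //; apply: (prodch _ E) => //; by case/andP: gg.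
    by move: (H (Sub u' (goodc _ _ gg eu' au'))); rewrite /e' SubK eu'.
  exists (fun x : G' => dom (val x)), (fun x : G' => [set h in S (val x) | okf P h]).
  split; last split.
  - move=> g; rewrite /lab'; have gg := valP g; have ag : alive (val g) by case/andP: gg.
    move: (sem (val g)); case E: (lab (val g)) => [a b||].
    + move=> [-> Sg]; split => //; rewrite Sg; apply/setP => h; rewrite !inE.
      apply/andP/idP => [[] //|/eqP hE]; split; first by rewrite hE.
      by move/existsP: ag => [h' /andP []]; rewrite Sg inE hE => /eqP ->.
    + move=> [domg Sg]; have [u0 eu0 au0] := unch _ E ag.
      have gu0 := goodc _ _ gg eu0 au0.
      have wdg := wd (val g); rewrite E in wdg.
      split.
        apply/setP => x; apply/idP/bigcupP.
          by move=> xd; exists (Sub u0 gu0); rewrite /e' ?SubK ?(wdg _ eu0).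
        by move=> [u eu]; rewrite (wdg _ eu).
      apply/setP => h; rewrite inE Sg; apply/andP/bigcupP.
        move=> [/bigcupP [u eu hu] okh].
        have au : alive u by apply/existsP; exists h; rewrite hu okh.
        by exists (Sub u (goodc _ _ gg eu au)); rewrite /e' ?SubK // inE hu okh.
      move=> [u eu]; rewrite inE => /andP [hu okh]; split => //.
      by apply/bigcupP; exists (val u).
    + move=> [domg Sg]; have chg := prodch _ E ag.
      have gch u : e u (val g) -> good u by move=> eu; apply: goodc gg eu (chg _ eu).
      split.
        apply/setP => x; rewrite domg; apply/bigcupP/bigcupP.
          by move=> [u eu xu]; exists (Sub u (gch _ eu)); rewrite /e' ?SubK.
        by move=> [u eu xu]; exists (val u).
      move=> h; rewrite inE; split.
        move=> /andP [/Sg [F [F1 F2]] okh].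
        exists (fun u : G' => F (val u)); split.
          move=> u eu; rewrite inE F1 //=; apply/okfP => a b Fu.
          by apply: (okfP _ _ okh); apply/F2; exists (val u).
        move=> a b; rewrite F2; split.
          by move=> [u [eu Fu]]; exists (Sub u (gch _ eu)); rewrite /e' !SubK.
        by move=> [u [eu Fu]]; exists (val u).
      move=> [F' [F1 F2]].
      pose F u := if insub u is Some u' then F' u' else [ffun _ => None] : pfun A B.
      have FE (u : G') : F (val u) = F' u by rewrite /F valK.
      apply/andP; split.
        apply/Sg; exists F; split.
          move=> u eu; have := F1 (Sub u (gch _ eu)) eu.
          by rewrite inE -FE SubK => /andP [].
        move=> a b; rewrite F2; split.
          by move=> [u [eu Fu]]; exists (val u); rewrite FE.
        by move=> [u [eu Fu]]; exists (Sub u (gch _ eu)); rewrite /e' -FE !SubK.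
      apply/okfP => a b /F2 [u [eu Fu]].
      by have := F1 u eu; rewrite inE => /andP [_ /okfP]; apply.
  - move=> g; rewrite /lab'; have := wd (val g); case: (lab (val g)) => [a b||] //.
      by move=> H u eu; apply: H.
    move=> H u v eu ev nuv; apply: H eu ev _.
    by apply: contra nuv => /eqP /val_inj ->.
  - move=> t /gsinkE st; apply/setP => h; rewrite !inE st (sk _ ss) //.
exists C; split => //; rewrite sC /gsize; apply: leq_add.
  by rewrite card_sig max_card.
rewrite -(card_imset _ (f := fun p : G' * G' => (val p.1, val p.2))); last first.
  by move=> [x y] [x' y'] /= [/val_inj -> /val_inj ->].
apply: subset_leq_card; apply/subsetP => q /imsetP [[x y]]; rewrite !inE /= => exy ->.
exact: exy.
Qed.

Lemma ex_min (P : nat -> Prop) k : P k -> exists n, P n /\ forall j, P j -> n <= j.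
Proof.
have [n] := ubnP k; elim: n k => // n IH k kn Pk.
case: (classic (exists j, j < k /\ P j)) => [[j [jk Pj]]|H].
  by apply: (IH j) => //; apply: leq_trans jk _; rewrite -ltnS.
exists k; split => // j Pj; rewrite leqNgt; apply/negP => jk; apply: H; by exists j.
Qed.

Lemma nat_min_spec (P : nat -> Prop) k : P k -> P (nat_min P) /\ nat_min P <= k.
Proof.
move=> Pk; have [n [Pn nmin]] := ex_min Pk.
have := epsilon_spec (inhabits 0%N)
    (fun n => (P n /\ forall k, P k -> n <= k) \/ ((forall k, ~ P k) /\ n = 0%N)).
rewrite -/(nat_min P) => -[]; first by exists n; left.
  by move=> [H1 H2]; split => //; apply: H2.
by move=> [H _]; case: (H _ Pk).
Qed.

Lemma nat_min_none (P : nat -> Prop) : (forall k, ~ P k) -> nat_min P = 0.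
Proof.
move=> nP.
have := epsilon_spec (inhabits 0%N)
    (fun n => (P n /\ forall k, P k -> n <= k) \/ ((forall k, ~ P k) /\ n = 0%N)).
rewrite -/(nat_min P) => -[]; first by exists 0; right.
  by move=> [H _]; case: (nP _ H).
by move=> [_ ->].
Qed.

Lemma nat_max_spec (P : nat -> Prop) u : (forall k, P k -> k <= u) ->
  (forall k, P k -> k <= nat_max P) /\ (forall v, (forall k, P k -> k <= v) -> nat_max P <= v).
Proof.
move=> ub; have [n [Pn nmin]] := ex_min (P := fun v => forall k, P k -> k <= v) ub.
have := epsilon_spec (inhabits 0%N)
    (fun n => (forall k, P k -> k <= n) /\
              (forall u, (forall k, P k -> k <= u) -> n <= u)).
by rewrite -/(nat_max P); apply; exists n.
Qed.

Definition dmin (A B : finType) (X : {set pfun A B}) : nat :=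
  nat_min (fun k => exists C : circuit A B, is_drep C X /\ csize C = k).

Lemma dmin_le (A B : finType) (X : {set pfun A B}) (C : circuit A B) :
  is_drep C X -> dmin X <= csize C.
Proof. by move=> H; apply: (proj2 (nat_min_spec _)); exists C. Qed.

Lemma dmin_none (A B : finType) (X : {set pfun A B}) :
  (forall C : circuit A B, ~ is_drep C X) -> dmin X = 0.
Proof. by move=> H; apply: nat_min_none => k [C [HC _]]; exact: H HC. Qed.

Definition tbound (n k : nat) := (n * k + n.+1) + (n * k + n.+1) ^ 2.

Lemma tbound_mono n n' k : n <= n' -> tbound n k <= tbound n' k.
Proof.
move=> nn; have h : n * k + n.+1 <= n' * k + n'.+1 by rewrite leq_add ?leq_mul.
by rewrite /tbound leq_add // leq_exp2r.
Qed.

Lemma triv_exists (A B : finType) (X : {set pfun A B}) (a0 : A) :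
  (forall h a, h \in X -> h a != None) -> X != set0 ->
  exists C : circuit A B, is_drep C X /\ csize C <= tbound #|X| #|A|.
Proof.
move=> tot /set0Pn [h0 h0X].
have [C [HC sC]] := transport (triv_drep a0 h0X tot).
by exists C; split => //; rewrite sC; exact: triv_size.
Qed.

Lemma dmin_restrict (A B : finType) (X : {set pfun A B}) (P : A -> B -> bool) :
  (forall h a, h \in X -> h a != None) ->
  dmin [set h in X | okf P h] <= dmin X.
Proof.
move=> tot.
case: (classic (exists C : circuit A B, is_drep C [set h in X | okf P h])) => [[C0 HC0]|]; last first.
  by move=> H; rewrite dmin_none // => C HC; apply: H; exists C.
have X'n := drep_nonempty (drep_g HC0).
case: (classic (inhabited A)) => [[a0]|nA]; last first.
  by case: (no_input_false (fun a => nA (inhabits a)) (drep_g HC0)).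
have Xn : X != set0.
  move: X'n; apply: contra => /eqP X0; apply/eqP/setP => h; by rewrite !inE X0 inE.
have [C1 [HC1 _]] := triv_exists a0 tot Xn.
have [HD1 HD2] := nat_min_spec (P := fun k => exists C : circuit A B, is_drep C X /\ csize C = k)
  (ex_intro _ C1 (conj HC1 erefl)).
move: HD1; rewrite -/(dmin X) => -[D [HD <-]].
have [C [HC sC]] := restrict (P := P) (drep_g HD) X'n.
by apply: leq_trans (dmin_le HC) _; rewrite (csize_g D).
Qed.

Lemma card_bigcup_le (I T : finType) (P : pred I) (F : I -> {set T}) :
  #|\bigcup_(i | P i) F i| <= \sum_(i | P i) #|F i|.
Proof.
elim/big_rec2: _ => [|i n U _ le]; first by rewrite cards0.
by rewrite (leq_trans (leq_card_setU _ _).1) ?leq_add2l.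
Qed.

Definition elts (sym : finType) (ar : sym -> nat) (B : structure ar) : {set univ B} :=
  \bigcup_(R : sym) \bigcup_(t in interp B R) [set x | x \in (t : seq _)].

Lemma card_elts (sym : finType) (ar : sym -> nat) (B : structure ar) :
  #|elts B| <= ssize B * \sum_(R : sym) ar R.
Proof.
rewrite /elts big_distrr /=; apply: leq_trans (card_bigcup_le _ _) _.
apply: leq_sum => R _; apply: leq_trans (card_bigcup_le _ _) _.
apply: leq_trans (_ : \sum_(t in interp B R) ar R <= _).
  apply: leq_sum => t _; rewrite cardsE; apply: leq_trans (card_size _) _.
  by rewrite size_tuple.
rewrite sum_nat_const leq_mul2r; apply/orP; right.
by rewrite /ssize (bigD1 R) //= leq_addr.
Qed.

Lemma card_univ (sym : finType) (ar : sym -> nat) (B : structure ar) :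
  connected B -> #|univ B| <= 1 + ssize B * \sum_(R : sym) ar R.
Proof.
move=> cB; case: (classic (exists x, x \notin elts B)) => [[x xn]|H].
  suff -> : #|univ B| = 1 by rewrite leq_addr.
  rewrite -cardsT; apply/eqP/cards1P; exists x; apply/setP => y; rewrite !inE.
  case: (eqVneq y x) => // nyx.
  have /connectP [[|z p] /= pp yx] := cB x y; first by rewrite yx eqxx in nyx.
  move: pp => /andP [/andP [_ /existsP [R /existsP [t /andP [tR /andP [xt _]]]]] _].
  by move: xn; rewrite /elts; case/bigcupP; exists R => //; apply/bigcupP; exists t; rewrite ?inE.
apply: leq_trans (_ : #|elts B| <= _); last first.
  by apply: leq_trans (card_elts B) _; rewrite leq_addl.
apply: leq_trans (_ : #|[set: univ B]| <= _); first by rewrite cardsT.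
apply: subset_leq_card; apply/subsetP => x _.
by case: (classic (x \in elts B)) => // hx; case: H; exists x; apply/negP.
Qed.

Lemma leq_expl m n e : m <= n -> m ^ e <= n ^ e.
Proof. by move=> mn; elim: e => // e IH; rewrite !expnS leq_mul. Qed.

Lemma homs_total (sym : finType) (ar : sym -> nat) (A B : structure ar) h a :
  h \in homs A B -> h a != None.
Proof. by rewrite inE => /existsP [f /andP [_ /eqP ->]]; rewrite ffunE. Qed.

Lemma card_homs (sym : finType) (ar : sym -> nat) (A B : structure ar) :
  #|homs A B| <= #|univ B| ^ #|univ A|.
Proof.
apply: leq_trans (_ : #|[set [ffun x => Some (f x)] | f : {ffun univ A -> univ B}]| <= _).
  apply: subset_leq_card; apply/subsetP => h; rewrite inE => /existsP [f /andP [_ /eqP ->]].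
  by apply/imsetP; exists f.
by apply: leq_trans (leq_imset_card _ _) _; rewrite card_ffun.
Qed.

Definition dbound (sym : finType) (ar : sym -> nat) (A : structure ar) (m : nat) :=
  tbound ((1 + m * \sum_(R : sym) ar R) ^ #|univ A|) #|univ A|.

Lemma dsize_bound (sym : finType) (ar : sym -> nat) (A B : structure ar) m :
  connected B -> ssize B <= m -> dsize A B <= dbound A m.
Proof.
move=> cB sB; change (dmin (homs A B) <= dbound A m).
case: (classic (exists C : circuit (univ A) (univ B), is_drep C (homs A B))) => [[C0 HC0]|]; last first.
  by move=> H; rewrite dmin_none // => C HC; apply: H; exists C.
have Xn := drep_nonempty (drep_g HC0).
case: (classic (inhabited (univ A))) => [[a0]|nA]; last first.
  by case: (no_input_false (fun a => nA (inhabits a)) (drep_g HC0)).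
have [C [HC sC]] := triv_exists a0 (@homs_total _ _ A B) Xn.
apply: leq_trans (dmin_le HC) _; apply: leq_trans sC _; apply: tbound_mono.
apply: leq_trans (card_homs A B) _; apply: leq_expl.
apply: leq_trans (card_univ cB) _; by rewrite leq_add2l leq_mul2r sB orbT.
Qed.

Definition reduct (sym : finType) (ar : sym -> nat) (U : finType) (C : structure (ar_id ar U))
  : structure ar := Structure (univ C) (fun R => interp C (inl R)).

Lemma tuple1_mem (T : eqType) (t : 1.-tuple T) x y : x \in (t : seq T) -> y \in (t : seq T) -> x = y.
Proof. by case: t => [[|z [|]]] //= _; rewrite !inE => /eqP -> /eqP ->. Qed.

Lemma connected_reduct (sym : finType) (ar : sym -> nat) (U : finType) (C : structure (ar_id ar U)) :
  connected C -> connected (reduct C).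
Proof.
move=> cC x y; apply: (connect_map (e := gaifman (reduct C)) (f := id) _ (cC x y)) => u v.
move=> /andP [nuv /existsP [[R|a] /existsP [t /andP [tR /andP [ut vt]]]]].
  by apply/andP; split => //; apply/existsP; exists R; apply/existsP; exists t; rewrite tR ut vt.
by move: nuv; rewrite (tuple1_mem ut vt) eqxx.
Qed.

Lemma ssize_reduct (sym : finType) (ar : sym -> nat) (U : finType) (C : structure (ar_id ar U)) :
  ssize (reduct C) <= ssize C.
Proof. by rewrite [X in _ <= X]/ssize big_sumType /= leq_addr. Qed.

Lemma homs_indiv (sym : finType) (ar : sym -> nat) (A : structure ar)
  (C : structure (ar_id ar (univ A))) :
  homs (indiv A) C = [set h in homs A (reduct C) | okf (fun a c => c \in Pset C a) h].
Proof.
apply/setP => h; rewrite !inE; apply/existsP/andP.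
  move=> [f /andP [/forallP hom /eqP hE]]; split.
    apply/existsP; exists f; rewrite hE eqxx andbT; apply/forallP => R.
    exact: (hom (inl R)).
  apply/okfP => a b; rewrite hE ffunE => -[<-]; rewrite inE.
  move: (hom (inr a)) => /forallP /(_ [tuple a]); rewrite /= inE eqxx /=.
  by have -> : map_tuple f [tuple a] = [tuple f a] by apply: val_inj.
move=> [/existsP [f /andP [/forallP hom /eqP hE]] /okfP ok].
exists f; rewrite hE eqxx andbT; apply/forallP => -[R|a]; first exact: hom R.
apply/forallP => t; apply/implyP; rewrite /= inE => /eqP ->.
have -> : map_tuple f [tuple a] = [tuple f a] by apply: val_inj.
by move: (ok a (f a)); rewrite hE ffunE inE; apply.
Qed.

Lemma dsize_indiv (sym : finType) (ar : sym -> nat) (A : structure ar)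
  (C : structure (ar_id ar (univ A))) :
  dsize (indiv A) C <= dsize A (reduct C).
Proof.
change (dmin (homs (indiv A) C) <= dmin (homs A (reduct C))).
rewrite homs_indiv; apply: dmin_restrict => h a; exact: (@homs_total _ _ A (reduct C)).
Qed.

Theorem lemma6p3 (sym : finType) (ar : sym -> nat) (A : structure ar)
  (hA : connected A) :
  big_Omega (dclass A (@all_structs sym ar))
            (dclass (indiv A) (@partition_class sym ar (univ A))).
Proof.
exists 1; split => //; exists 0 => m _; rewrite mul1n.
have bf : forall k, (exists C : structure ar, all_structs C /\ ssize C <= m /\ k = dsize A C) ->
    k <= dbound A m.
  by move=> k [C [cC [sC ->]]]; apply: dsize_bound.
have [fub _] := nat_max_spec bf.
have bg : forall k, (exists C, @partition_class sym ar (univ A) C /\ ssize C <= m /\ k = dsize (indiv A) C) ->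
    k <= dclass A (@all_structs sym ar) m.
  move=> k [C [[cC _] [sC ->]]]; apply: leq_trans (dsize_indiv C) _.
  apply: fub; exists (reduct C); split; first exact: connected_reduct.
  by split => //; apply: leq_trans (ssize_reduct C) sC.
have [_ gl] := nat_max_spec bg.
exact: gl _ bg.
Qed.
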